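(* Let $V$ be a $\mathbb{Z}$-graded vertex algebra with $V=C_2(V)$. If a weak $V$-module $M$ is completely reducible, then $M=\widetilde{C}_2(M)$.
   Context: A $\mathbb{Z}$-graded vertex algebra is a vertex algebra $V=\bigoplus_{n\in\mathbb{Z}}V_n$ with a conformal vector $\omega\in V_2$ whose modes $L(n)$ (where $Y(\omega,z)=\sum_nL(n)z^{-n-2}$) satisfy the Virasoro relations, with $L(0)$ acting on $V_n$ as $n$ and $Y(L(-1)v,z)=\frac{d}{dz}Y(v,z)$. Modes: $Y(v,z)=\sum_n v_nz^{-n-1}$. $C_2(V)=\mathrm{Span}_{\mathbb{C}}\{u_{-2}v\mid u,v\in V\}$; for a weak $V$-module $M$, $\widetilde{C}_2(M)=\mathrm{Span}_{\mathbb{C}}\{u_{-2}w\mid u\in V,\ w\in M\}$. A weak $V$-module is completely reducible if it is a direct sum of finitely many irreducible weak $V$-modules (irreducible meaning no weak submodules other than $0$ and itself). *)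

(* Defs.v *)
From HB Require Import structures.
From mathcomp Require Import all_boot all_order all_algebra.
Set Implicit Arguments. Unset Strict Implicit. Unset Printing Implicit Defensive.
Import Order.TTheory GRing.Theory Num.Theory.
Local Open Scope ring_scope.

(* Generalized binomial coefficient binom(p, i) for p : int, i : nat,
   as an integer: binom(n,i) = C(n,i) for n >= 0 and
   binom(-(k+1), i) = (-1)^i C(k+i, i). *)
Definition binz (p : int) (i : nat) : int :=
  match p with
  | Posz n => ('C(n, i))%:Z
  | Negz k => (-1) ^+ i * ('C(k + i, i))%:Z
  end.

Definition sgnz (r : int) : int := (-1) ^+ `|r|%N.

Section VA.
Variables (K : fieldType) (V : lmodType K).

(* Modes: Y u n w = u_n w, where Y(u,z) = sum_n u_n z^{-n-1}. *)

Definition bilinear_modes (M : lmodType K) (Y : V -> int -> M -> M) : Prop :=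
  (forall (a : K) u u' n w, Y (a *: u + u') n w = a *: Y u n w + Y u' n w) /\
  (forall (a : K) u n w w', Y u n (a *: w + w') = a *: Y u n w + Y u n w').

Definition truncation (M : lmodType K) (Y : V -> int -> M -> M) : Prop :=
  forall u w, exists N : int, forall n, N <= n -> Y u n w = 0.

Definition vacuum_property (M : lmodType K) (Y : V -> int -> M -> M) (vac : V) :=
  forall n w, Y vac n w = if n == -1 then w else 0.

(* Jacobi identity in component (Borcherds) form: for all u v in V, w in M,
   p q r in Z,
   sum_{i>=0} binom(p,i) (u_{r+i} v)_{p+q-i} w
     = sum_{i>=0} (-1)^i binom(r,i) (u_{p+r-i} v_{q+i} w
                                     - (-1)^r v_{q+r-i} u_{p+i} w).
   Both sums are finite by truncation; we state that the partial sums agree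
   for all sufficiently large cut-offs. *)
Definition jacobi (Y : V -> int -> V -> V) (M : lmodType K)
    (YM : V -> int -> M -> M) : Prop :=
  forall (u v : V) (w : M) (p q r : int),
    exists N : nat, forall B : nat, (N <= B)%N ->
      \sum_(i < B) (YM (Y u (r + (i : nat)%:Z) v) (p + q - (i : nat)%:Z) w) *~ binz p i
      = \sum_(i < B)
          ((YM u (p + r - (i : nat)%:Z) (YM v (q + (i : nat)%:Z) w)
            - (YM v (q + r - (i : nat)%:Z) (YM u (p + (i : nat)%:Z) w)) *~ sgnz r)
           *~ ((-1) ^+ (i : nat) * binz r i)).

Definition subspace (M : lmodType K) (W : M -> Prop) : Prop :=
  W 0 /\ forall (a : K) x y, W x -> W y -> W (a *: x + y).

Definition is_Zgraded_VA (Y : V -> int -> V -> V) (vac omega : V)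
    (Vg : int -> V -> Prop) : Prop :=
  let L := fun m : int => Y omega (m + 1) in
  bilinear_modes Y /\ truncation Y /\ vacuum_property Y vac /\
  (forall v n, 0 <= n -> Y v n vac = 0) /\ (forall v, Y v (-1) vac = v) /\
  jacobi Y Y /\
  (forall n, subspace (Vg n)) /\
  (forall v, exists (s : seq int) (f : int -> V),
      (forall n, Vg n (f n)) /\ v = \sum_(n <- s) f n) /\
  (forall (s : seq int) (f : int -> V), uniq s -> (forall n, Vg n (f n)) ->
      \sum_(n <- s) f n = 0 -> forall n, n \in s -> f n = 0) /\
  Vg 2 omega /\
  (exists c : K, forall (m n : int) (v : V),
      L m (L n v) - L n (L m v)
      = (L (m + n) v) *~ (m - n)
        + (if m + n == 0 then (((m ^+ 3 - m)%:~R / 12%:R) * c) *: v else 0)) /\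
  (forall (n : int) v, Vg n v -> L 0 v = n%:~R *: v) /\
  (forall v (n : int) w, Y (L (-1) v) n w = - ((Y v (n - 1) w) *~ n)).

Definition is_weak_module (Y : V -> int -> V -> V) (vac : V) (M : lmodType K)
    (YM : V -> int -> M -> M) : Prop :=
  bilinear_modes YM /\ truncation YM /\ vacuum_property YM vac /\ jacobi Y YM.

Definition weak_submodule (M : lmodType K) (YM : V -> int -> M -> M)
    (W : M -> Prop) : Prop :=
  subspace W /\ forall u n w, W w -> W (YM u n w).

Definition irreducible_sub (M : lmodType K) (YM : V -> int -> M -> M)
    (W : M -> Prop) : Prop :=
  weak_submodule YM W /\
  forall N : M -> Prop, weak_submodule YM N -> (forall x, N x -> W x) ->
    (forall x, N x -> x = 0) \/ (forall x, N x <-> W x).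

Definition completely_reducible (M : lmodType K) (YM : V -> int -> M -> M) :=
  exists (k : nat) (W : 'I_k -> M -> Prop),
    (forall i, irreducible_sub YM (W i)) /\
    (forall m, exists f : 'I_k -> M, (forall i, W i (f i)) /\ m = \sum_i f i) /\
    (forall f : 'I_k -> M, (forall i, W i (f i)) -> \sum_i f i = 0 ->
        forall i, f i = 0).

End VA.

Definition inspan (K : fieldType) (M : lmodType K) (S : M -> Prop) (x : M) :=
  exists s : seq (K * M), (forall p, p \in s -> S p.2) /\
    x = \sum_(p <- s) p.1 *: p.2.

Definition C2 (K : fieldType) (V : lmodType K) (Y : V -> int -> V -> V) :=
  inspan (fun y => exists u v, y = Y u (-2) v).

Definition C2t (K : fieldType) (V M : lmodType K) (YM : V -> int -> M -> M) :=
  inspan (fun y => exists (u : V) (w : M), y = YM u (-2) w).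

(* Main.v *)
Require Import Defs.
From HB Require Import structures.
From mathcomp Require Import all_boot all_order all_algebra.
Import Order.TTheory GRing.Theory Num.Theory.
Local Open Scope ring_scope.

Section Span.
Variables (K : fieldType) (M : lmodType K) (S : M -> Prop).

Lemma inspan0 : inspan S 0.
Proof. by exists [::]; split => // ; rewrite big_nil. Qed.

Lemma inspan1 x : S x -> inspan S x.
Proof.
move=> Sx; exists [:: (1, x)]; split; first by move=> p; rewrite inE => /eqP ->.
by rewrite big_seq1 scale1r.
Qed.

Lemma inspanD x y : inspan S x -> inspan S y -> inspan S (x + y).
Proof.
move=> [s [Hs ->]] [t [Ht ->]]; exists (s ++ t); split; last by rewrite big_cat.
by move=> p; rewrite mem_cat => /orP [/Hs|/Ht].
Qed.

Lemma inspanZ a x : inspan S x -> inspan S (a *: x).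
Proof.
move=> [s [Hs ->]]; exists [seq (a * p.1, p.2) | p <- s]; split.
  by move=> p /mapP [q /Hs Hq ->].
by rewrite big_map scaler_sumr; apply: eq_bigr => p _; rewrite scalerA.
Qed.

Lemma inspanZz x z : inspan S x -> inspan S (x *~ z).
Proof. by move=> H; rewrite -scaler_int; apply: inspanZ. Qed.

Lemma inspanB x y : inspan S x -> inspan S y -> inspan S (x - y).
Proof. by move=> Hx Hy; apply: inspanD => //; rewrite -scaleN1r; apply: inspanZ. Qed.

Lemma inspan_sum B (F : 'I_B -> M) : (forall i, inspan S (F i)) -> inspan S (\sum_i F i).
Proof.
move=> H; apply: (big_ind (fun x => inspan S x)) => //; first exact: inspan0.
by move=> x y; apply: inspanD.
Qed.
End Span.

Lemma idx1 (m i : nat) : (- (m.+2)%:Z + i%:Z == -1) = (i == m.+1).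
Proof.
rewrite addrC subr_eq.
have -> : (-1 + (m.+2)%:Z) = (m.+1)%:Z by rewrite -[(m.+2)%N]addn1 PoszD addrC addrK.

by rewrite eqz_nat.
Qed.

Lemma idx2 (m i : nat) : (- (m.+2)%:Z + -2 - i%:Z == -1) = false.
Proof.
have -> : - (m.+2)%:Z + -2 - i%:Z = - ((m + i).+4)%:Z.
  rewrite (_ : (-2 : int) = - (2%:Z)) // -!opprD -!PoszD.
  by congr (- Posz _); rewrite addn2 !addSn.
by rewrite (_ : (-1:int) = - 1%:Z) // eqr_opp.
Qed.

Lemma idx3 (i : nat) : (0 + -2 - i%:Z) = - (i.+2)%:Z.
Proof. by case: i. Qed.

Lemma idx4 (i : nat) : (-1 + -2 - i%:Z) = - (i.+1.+2)%:Z.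
Proof. by case: i. Qed.

Theorem corollary2p14 (K : fieldType) (charK : [pchar K] =i pred0)
  (V : lmodType K) (Y : V -> int -> V -> V) (vac omega : V)
  (Vg : int -> V -> Prop) :
  is_Zgraded_VA Y vac omega Vg ->
  (forall v : V, C2 Y v) ->
  forall (M : lmodType K) (YM : V -> int -> M -> M),
    is_weak_module Y vac YM ->
    completely_reducible YM ->
    forall m : M, C2t YM m.
Proof.
move=> _ HC2 M YM [[bil1 bil2] [_ [vacP jac]]] _.
set S := (fun y : M => exists (u : V) (w : M), y = YM u (-2) w).
have der : forall (n : nat) u w,
    YM (Y u (-2) vac) (- (n.+2)%:Z) w = YM u (- (n.+3)%:Z) w *~ (n.+2)%:Z.
  move=> n u w.
  have Y0 : forall u n, YM u n 0 = 0.
    by move=> u' n'; have := bil2 (-1) u' n' 0 0; rewrite scaler0 add0r scaleN1r addNr.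
  have [N HN] := jac u vac w 0 (- (n.+2)%:Z) (-2).
  have := HN (N + n.+2)%N (leq_addr _ _).
  rewrite addnS big_ord_recl big1; last first.
    by move=> i _; rewrite /binz /= mulr0z.
  rewrite /binz /= addr0 mulr1z add0r subr0 => ->.
  have Hi : (n.+1 < (N + n.+1).+1)%N by rewrite ltnS leq_addl.
  rewrite (bigD1 (Ordinal Hi)) //= big1; last first.
    move=> i /negbTE Hne.
    rewrite !vacP idx1 idx2.
    have -> : ((i : nat) == n.+1) = false.
      by apply/negbTE; apply: contraFN Hne => /eqP Hv; apply/eqP/val_inj.
    by rewrite Y0 mul0rz subr0 mul0rz.
  rewrite !vacP idx1 idx2 eqxx mul0rz subr0 addr0 idx3.
  by rewrite mulrA -exprMn mulrNN mulr1 expr1n mul1r add0n add1n binSn.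
have modes : forall (n : nat) u w, inspan S (YM u (- (n.+2)%:Z) w).
  elim=> [|n IH] u w; first by apply: inspan1; exists u, w.
  have Hn : ((n.+2)%:R : K) != 0.
    by rewrite ((pcharf0P K).1 charK).
  rewrite (_ : YM u (- (n.+3)%:Z) w = (n.+2)%:R^-1 *: YM (Y u (-2) vac) (- (n.+2)%:Z) w).
    by apply: inspanZ; apply: IH.
  by rewrite der -scaler_int scalerA (_ : ((n.+2)%:Z)%:~R = (n.+2)%:R :> K) // mulVf // scale1r.
have YM0 : forall n w, YM 0 n w = 0.
  by move=> n' w'; have := bil1 (-1) 0 0 n' w'; rewrite scaler0 add0r scaleN1r addNr.
have key : forall u v w, inspan S (YM (Y u (-2) v) (-1) w).
  move=> u v w.
  have [N HN] := jac u v w 0 (-1) (-2).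
  have := HN N.+1 (leqnSn _).
  rewrite big_ord_recl big1; last first.
    by move=> i _; rewrite /binz /= mulr0z.
  rewrite /binz /= addr0 mulr1z add0r subr0 => ->.
  apply: inspan_sum => i; apply: inspanZz; apply: inspanB; last apply: inspanZz.
    by rewrite idx3; apply: modes.
  by rewrite idx4; apply: modes.
move=> m.
rewrite -[m](_ : YM vac (-1) m = m); last by rewrite vacP.
have [s [Hs ->]] := HC2 vac.
elim: s Hs => [|p s IHs] Hs.
  by rewrite big_nil YM0; apply: inspan0.
rewrite big_cons bil1; apply: inspanD; last by apply: IHs => q Hq; apply: Hs; rewrite inE Hq orbT.
apply: inspanZ.
have [u [v ->]] := Hs p (mem_head _ _).
exact: key.
Qed.
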